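(* Let $\mathcal U$ and $\mathcal V$ be non-commutative domains in $M(\mathbb C)^g$. If $f:\mathcal U\to\mathcal V$ is a free map and each $f[n]:\mathcal U(n)\to\mathcal V(n)$ is bianalytic (a holomorphic bijection with holomorphic inverse), then $f$ is a bianalytic free map, i.e. $f$ and $f^{-1}=(f[n]^{-1})_n:\mathcal V\to\mathcal U$ are both proper analytic free maps.
   Context: $M_n(\mathbb C)^g$ denotes $g$-tuples $X=(X_1,\dots,X_g)$ of $n\times n$ complex matrices; $X\Gamma$, $\Gamma Y$, $U^*XU$, $X\oplus Y$ are defined entrywise (the last block diagonally). A non-commutative set $\mathcal U\subseteq M(\mathbb C)^g$ is a sequence $(\mathcal U(n))_n$, $\mathcal U(n)\subseteq M_n(\mathbb C)^g$, closed under simultaneous unitary similarity $X\mapsto U^*XU$ and under direct sums $X\in\mathcal U(n),Y\in\mathcal U(m)\Rightarrow X\oplus Y\in\mathcal U(n+m)$; it is a non-commutative domain if each $\mathcal U(n)$ is open and connected. A free map $f:\mathcal U\to\mathcal V$ is a sequence of functions $f[n]:\mathcal U(n)\to\mathcal V(n)$ such that whenever $X\in\mathcal U(n)$, $Y\in\mathcal U(m)$, $\Gamma\in\mathbb C^{n\times m}$ with $X\Gamma=\Gamma Y$, then $f[n](X)\Gamma=\Gamma f[m](Y)$. An analytic free map is a free map with each $f[n]$ holomorphic; it is proper if each $f[n]:\mathcal U(n)\to\mathcal V(n)$ is proper (preimages of compact sets are compact). *)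

(* Defs.v *)
From HB Require Import structures.
From mathcomp Require Import all_boot all_order all_algebra.
From mathcomp Require Import classical_sets reals.
From mathcomp.real_closed Require Import complex.
From Stdlib Require List.
Set Implicit Arguments. Unset Strict Implicit. Unset Printing Implicit Defensive.
Import Order.TTheory GRing.Theory Num.Theory.
Local Open Scope ring_scope.
Local Open Scope classical_set_scope.

Section NC.
Variables (R : realType) (g : nat).

Definition tup (n : nat) := 'I_g -> 'M[R[i]]_n.

Definition tadd n (X Y : tup n) : tup n := fun k => X k + Y k.
Definition topp n (X : tup n) : tup n := fun k => - X k.
Definition tscale n (a : R[i]) (X : tup n) : tup n := fun k => a *: X k.

(* a norm on M_n(C)^g = C^(g n^2) (the l^1 norm of the entries; all norms on
   this finite-dimensional space are equivalent, so it induces the Euclidean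
   topology) *)
Definition tnorm n (X : tup n) : R[i] :=
  \sum_(k < g) \sum_(i < n) \sum_(j < n) `|X k i j|.

Definition topen n (S : set (tup n)) : Prop :=
  forall X, S X -> exists2 e : R[i], 0 < e &
    forall Y, tnorm (tadd Y (topp X)) < e -> S Y.

Definition tconnected n (S : set (tup n)) : Prop :=
  forall A B : set (tup n), topen A -> topen B ->
    S `<=` A `|` B -> S `&` A `&` B = set0 ->
    S `&` A = set0 \/ S `&` B = set0.

Definition tcompact n (K : set (tup n)) : Prop :=
  forall (I : Type) (O : I -> set (tup n)), (forall i, topen (O i)) ->
    K `<=` \bigcup_i O i ->
    exists s : seq I, K `<=` \bigcup_(i in [set i | List.In i s]) O i.

Definition tholo n m (S : set (tup n)) (F : tup n -> tup m) : Prop :=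
  forall X, S X -> exists L : tup n -> tup m,
    (forall (a : R[i]) (H K : tup n),
        L (tadd (tscale a H) K) = tadd (tscale a (L H)) (L K)) /\
    (forall e : R[i], 0 < e -> exists2 d : R[i], 0 < d &
       forall H : tup n, tnorm H < d ->
         tnorm (tadd (F (tadd X H)) (topp (tadd (F X) (L H)))) <= e * tnorm H).

Definition tproper n m (S : set (tup n)) (T : set (tup m)) (F : tup n -> tup m)
  : Prop :=
  forall K, K `<=` T -> tcompact K -> tcompact (S `&` (F @^-1` K)).

Definition tmulr n m (X : tup n) (G : 'M[R[i]]_(n, m)) : 'I_g -> 'M[R[i]]_(n, m) :=
  fun k => X k *m G.
Definition tmull n m (G : 'M[R[i]]_(n, m)) (Y : tup m) : 'I_g -> 'M[R[i]]_(n, m) :=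
  fun k => G *m Y k.
Definition adjmx n m (A : 'M[R[i]]_(n, m)) : 'M[R[i]]_(m, n) :=
  (map_mx Num.conj A)^T.
Definition unitary n (U : 'M[R[i]]_n) : Prop := U *m adjmx U = 1%:M.
Definition tconj n (U : 'M[R[i]]_n) (X : tup n) : tup n :=
  fun k => adjmx U *m X k *m U.
Definition tdsum n m (X : tup n) (Y : tup m) : tup (n + m) :=
  fun k => block_mx (X k) 0 0 (Y k).

Definition ncset (U : forall n, set (tup n)) : Prop :=
  (forall n (X : tup n) (V : 'M[R[i]]_n), U n X -> unitary V -> U n (tconj V X))
  /\ (forall n m (X : tup n) (Y : tup m), U n X -> U m Y -> U (n + m) (tdsum X Y)).

Definition ncdomain (U : forall n, set (tup n)) : Prop :=
  ncset U /\ forall n, topen (U n) /\ tconnected (U n).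

Definition free_map (U V : forall n, set (tup n)) (f : forall n, tup n -> tup n)
  : Prop :=
  (forall n X, U n X -> V n (f n X)) /\
  (forall n m (X : tup n) (Y : tup m) (G : 'M[R[i]]_(n, m)),
     U n X -> U m Y -> tmulr X G = tmull G Y ->
     tmulr (f n X) G = tmull G (f m Y)).

Definition analytic_free_map U V f : Prop :=
  free_map U V f /\ forall n, tholo (U n) (f n).

Definition proper_analytic_free_map U V f : Prop :=
  analytic_free_map U V f /\ forall n, tproper (U n) (V n) (f n).

Definition bianalytic_with_inverse n (U V : set (tup n)) (F H : tup n -> tup n)
  : Prop :=
  [/\ (forall X, U X -> V (F X)), (forall Y, V Y -> U (H Y)),
      (forall X, U X -> H (F X) = X), (forall Y, V Y -> F (H Y) = Y) &
      (tholo U F /\ tholo V H)].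

End NC.

(* Main.v *)
Require Import Defs.
From HB Require Import structures.
From mathcomp Require Import all_boot all_order all_algebra.
From mathcomp Require Import classical_sets reals boolp.
From mathcomp.real_closed Require Import complex.
Set Implicit Arguments. Unset Strict Implicit. Unset Printing Implicit Defensive.
Import Order.TTheory GRing.Theory Num.Theory.
Local Open Scope ring_scope.
Local Open Scope classical_set_scope.

Section Aux.
Variables (R : realType) (g : nat).
Local Notation C := R[i].

Definition tzero n : tup R g n := fun _ => 0.

Lemma tnorm_ge0 n (X : tup R g n) : 0 <= tnorm X.
Proof. by apply: sumr_ge0 => k _; apply: sumr_ge0 => i _; apply: sumr_ge0. Qed.

Lemma tnormD n (X Y : tup R g n) : tnorm (tadd X Y) <= tnorm X + tnorm Y.
Proof.
rewrite /tnorm -big_split /=; apply: ler_sum => k _.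
rewrite -big_split /=; apply: ler_sum => i _.
rewrite -big_split /=; apply: ler_sum => j _.
by rewrite /tadd mxE ler_normD.
Qed.

Lemma tnormZ n a (X : tup R g n) : tnorm (tscale a X) = `|a| * tnorm X.
Proof.
rewrite /tnorm mulr_sumr; apply: eq_bigr => k _.
rewrite mulr_sumr; apply: eq_bigr => i _.
rewrite mulr_sumr; apply: eq_bigr => j _.
by rewrite /tscale mxE normrM.
Qed.

Lemma tnorm0 n : tnorm (tzero n) = 0.
Proof.
rewrite /tnorm big1 // => k _; rewrite big1 // => i _; rewrite big1 // => j _.
by rewrite /tzero mxE normr0.
Qed.

Lemma tnorm_big n (I : Type) (r : seq I) (F : I -> tup R g n) :
  tnorm (\big[@tadd R g n/tzero n]_(x <- r) F x) <= \sum_(x <- r) tnorm (F x).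
Proof.
elim: r => [|x r IH]; first by rewrite !big_nil tnorm0.
rewrite !big_cons; apply: le_trans (tnormD _ _) _; exact: lerD.
Qed.

Lemma sum_ge_term (I : finType) (F : I -> C) i :
  (forall j, 0 <= F j) -> F i <= \sum_j F j.
Proof. by move=> h; rewrite (bigD1 i) //= lerDl sumr_ge0. Qed.

Lemma pos_min (a b : C) : 0 < a -> 0 < b -> exists2 c : C, 0 < c & (c <= a) && (c <= b).
Proof.
move=> ha hb; have ra := gtr0_real ha; have rb := gtr0_real hb.
case: (real_leP ra rb) => hab.
  by exists a => //; rewrite lexx hab.
by exists b => //; rewrite lexx andbT ltW.
Qed.

Section Lin.
Variables (n m : nat) (L : tup R g n -> tup R g m).
Hypothesis hL : forall (a : C) (H K : tup R g n),
  L (tadd (tscale a H) K) = tadd (tscale a (L H)) (L K).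

Lemma L0 : L (tzero n) = tzero m.
Proof.
have := hL 1 (tzero n) (tzero n).
have -> : tadd (tscale 1 (tzero n)) (tzero n) = tzero n.
  by apply: funext => k; rewrite /tadd /tscale /tzero scaler0 addr0.
move=> /(congr1 (fun Z => tadd Z (topp (L (tzero n))))).
move=> h; apply: funext => k; have := congr1 (fun f => f k) h.
by rewrite /tadd /topp /tscale /tzero scale1r subrr addrK.
Qed.

Lemma LD H K : L (tadd H K) = tadd (L H) (L K).
Proof.
have := hL 1 H K.
have -> : tscale 1 H = H by apply: funext => k; rewrite /tscale scale1r.
have -> : tscale 1 (L H) = L H by apply: funext => k; rewrite /tscale scale1r.
by [].
Qed.

Lemma LZ a H : L (tscale a H) = tscale a (L H).
Proof.
have := hL a H (tzero n); rewrite L0.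
have E : forall p (Z : tup R g p), tadd Z (tzero p) = Z.
  by move=> p Z; apply: funext => k; rewrite /tadd /tzero addr0.
by rewrite !E.
Qed.

Definition Emat (k : 'I_g) (i j : 'I_n) : tup R g n :=
  fun k' => if k' == k then delta_mx i j else 0.

Lemma decomp (H : tup R g n) : H =
  \big[@tadd R g n/tzero n]_(k < g) \big[@tadd R g n/tzero n]_(i < n)
   \big[@tadd R g n/tzero n]_(j < n) tscale (H k i j) (Emat k i j).
Proof.
apply: funext => k'.
have ev : forall (I : Type) (r : seq I) (F : I -> tup R g n),
   (\big[@tadd R g n/tzero n]_(x <- r) F x) k' = \sum_(x <- r) F x k'.
  move=> I r F; exact: (big_morph (fun X : tup R g n => X k') (id1 := 0) (op1 := +%R)).
rewrite ev (bigD1 k') //= big1 ?addr0.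
  rewrite ev [LHS]matrix_sum_delta; apply: eq_bigr => i _.
  rewrite ev; apply: eq_bigr => j _.
  by rewrite /tscale /Emat eqxx.
move=> k hk; rewrite ev big1 // => i _; rewrite ev big1 // => j _.
by rewrite /tscale /Emat eq_sym (negbTE hk) scaler0.
Qed.

Lemma L_bound : exists2 M : C, 0 <= M & forall H, tnorm (L H) <= M * tnorm H.
Proof.
set M := \sum_(k < g) \sum_(i < n) \sum_(j < n) tnorm (L (Emat k i j)).
have M0 : 0 <= M by apply: sumr_ge0 => k _; apply: sumr_ge0 => i _; apply: sumr_ge0 => j _; apply: tnorm_ge0.
exists M => // H.
have Lbig : forall (I : Type) (r : seq I) (F : I -> tup R g n),
   L (\big[@tadd R g n/tzero n]_(x <- r) F x) = \big[@tadd R g m/tzero m]_(x <- r) L (F x).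
  move=> I r F; exact: (big_morph L LD L0).
rewrite {1}(decomp H) Lbig.
apply: le_trans (tnorm_big _ _) _.
rewrite /tnorm mulr_sumr; apply: ler_sum => k _.
rewrite Lbig; apply: le_trans (tnorm_big _ _) _.
rewrite mulr_sumr; apply: ler_sum => i _.
rewrite Lbig; apply: le_trans (tnorm_big _ _) _.
rewrite mulr_sumr; apply: ler_sum => j _.
rewrite LZ tnormZ mulrC; apply: ler_wpM2r; first exact: normr_ge0.
have h1 := @sum_ge_term _ (fun j => tnorm (L (Emat k i j))) j (fun j0 => tnorm_ge0 _).
have h2 := @sum_ge_term _ (fun i => \sum_(j < n) tnorm (L (Emat k i j))) i
  (fun i0 => sumr_ge0 _ (fun j0 _ => tnorm_ge0 _)).
have h3 := @sum_ge_term _ (fun k => \sum_(i < n) \sum_(j < n) tnorm (L (Emat k i j))) k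
  (fun k0 => sumr_ge0 _ (fun i0 _ => sumr_ge0 _ (fun j0 _ => tnorm_ge0 _))).
exact: le_trans h1 (le_trans h2 h3).
Qed.
End Lin.

Lemma holo_cont n m (S : set (tup R g n)) (F : tup R g n -> tup R g m) X :
  tholo S F -> S X -> forall e : C, 0 < e -> exists2 d : C, 0 < d &
  forall Y, tnorm (tadd Y (topp X)) < d -> tnorm (tadd (F Y) (topp (F X))) < e.
Proof.
move=> hF SX e he.
have [L [hL hd]] := hF X SX.
have [M M0 hM] := L_bound hL.
have [d1 d1p hd1] := hd 1 ltr01.
have M1 : 0 < 1 + M by apply: ltr_wpDr M0 ltr01.
have cp : 0 < e / (1 + M) by apply: divr_gt0.
have [d dp /andP[dd1 dc]] := pos_min d1p cp.
exists d => // Y hY.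
set H := tadd Y (topp X).
have YE : Y = tadd X H.
  by apply: funext => k; rewrite /H /tadd /topp addrC subrK.
have DE : tadd (F Y) (topp (F X)) =
   tadd (tadd (F (tadd X H)) (topp (tadd (F X) (L H)))) (L H).
  by rewrite -YE; apply: funext => k; rewrite /tadd /topp opprD !addrA subrK.
rewrite DE; apply: le_lt_trans (tnormD _ _) _.
have h1 : tnorm (tadd (F (tadd X H)) (topp (tadd (F X) (L H)))) <= 1 * tnorm H.
  by apply: hd1; apply: lt_le_trans hY dd1.
apply: le_lt_trans (lerD h1 (hM H)) _.
rewrite -mulrDl.
have : tnorm H < e / (1 + M) by apply: lt_le_trans hY dc.
by rewrite ltr_pdivlMr // mulrC.
Qed.

Lemma compact_image n (S : set (tup R g n)) (F : tup R g n -> tup R g n) K :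
  topen S -> tholo S F -> K `<=` S -> tcompact K -> tcompact (F @` K).
Proof.
move=> oS hF KS cK I O oO cov.
have := cK I (fun i => S `&` (F @^-1` O i)).
case.
- move=> i X [SX OFX].
  have [e1 e1p h1] := oS X SX.
  have [e2 e2p h2] := oO i (F X) OFX.
  have [d dp hd] := holo_cont hF SX e2p.
  have [c cp /andP[c1 c2]] := pos_min e1p dp.
  exists c => // Y hY.
  have SY : S Y by apply: h1; apply: lt_le_trans hY c1.
  split => //; rewrite /preimage /=.
  by apply: h2; apply: hd; apply: lt_le_trans hY c2.
- move=> x Kx.
  have [i _ Oi] := cov (F x) (ex_intro2 _ _ x Kx erefl).
  by exists i => //; split => //; apply: KS.
- move=> s hs; exists s => y [x Kx <-].
  have [i si [_ Oi]] := hs x Kx.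
  by exists i.
Qed.

End Aux.

Section T.
Variables (R : realType) (g : nat).
Local Notation C := R[i].
Lemma blk_facts n m (X : tup R g n) (X' : tup R g m) (G : 'M[C]_(n,m)) :
 let Z := tdsum X X' in
 let G1 : 'M[C]_(n+m, n) := col_mx 1%:M 0 in
 let P2 : 'M[C]_(m, n+m) := row_mx 0 1%:M in
 let P1 : 'M[C]_(n, n+m) := row_mx 1%:M 0 in
 let G2 : 'M[C]_(n+m, m) := col_mx 0 1%:M in
 (P2 *m G1 = 0) /\ (P1 *m G1 = 1%:M) /\ (P2 *m G2 = 1%:M) /\
 (forall k, Z k *m G1 = G1 *m X k) /\ (forall k, P2 *m Z k = X' k *m P2).
Proof.
move=> Z G1 P2 P1 G2.
split; first by rewrite /P2 /G1 mul_row_col mul0mx mul1mx addr0.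
split; first by rewrite /P1 /G1 mul_row_col mul0mx mul1mx addr0.
split; first by rewrite /P2 /G2 mul_row_col mul0mx mul1mx add0r.
split; first by move=> k; rewrite /Z /tdsum /G1 mul_block_col mul_col_mx !mulmx1 !mulmx0 !mul1mx !mul0mx ?addr0 ?add0r.
by move=> k; rewrite /Z /tdsum /P2 mul_row_block mul_mx_row !mulmx1 !mulmx0 !mul1mx !mul0mx ?addr0 ?add0r.
Qed.

Lemma inv_free (U V : forall n, set (tup R g n)) (f h : forall n, tup R g n -> tup R g n) :
  (forall n, topen (U n)) ->
  (forall n m (X : tup R g n) (Y : tup R g m), U n X -> U m Y -> U (n + m) (tdsum X Y)) ->
  free_map U V f -> (forall n, bianalytic_with_inverse (U n) (V n) (f n) (h n)) ->
  forall n m (Y : tup R g n) (Y' : tup R g m) (G : 'M[C]_(n, m)),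
  V n Y -> V m Y' -> tmulr Y G = tmull G Y' -> tmulr (h n Y) G = tmull G (h m Y').
Proof.
move=> oU dU [fUV fint] bi n m Y Y' G VY VY' hYG.
have [_ hVU _ fh _] := bi n; have [_ hVU' _ fh' _] := bi m.
have [_ _ hfU _ _] := bi (n + m)%N.
set X := h n Y; set X' := h m Y'.
have UX : U n X by apply: hVU.
have UX' : U m X' by apply: hVU'.
have fX : f n X = Y by apply: fh.
have fX' : f m X' = Y' by apply: fh'.
set Z := tdsum X X'.
have UZ : U (n + m) Z by apply: dU.
set G1 : 'M[C]_(n+m, n) := col_mx 1%:M 0.
set P2 : 'M[C]_(m, n+m) := row_mx 0 1%:M.
set P1 : 'M[C]_(n, n+m) := row_mx 1%:M 0.
set G2 : 'M[C]_(n+m, m) := col_mx 0 1%:M.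
have [P2G1 [P1G1 [P2G2 [ZG1 P2Z]]]] := blk_facts X X' G.
set N : 'M[C]_(n+m) := G1 *m G *m P2.
have NN : N *m N = 0.
  have -> : N *m N = G1 *m G *m (P2 *m G1) *m G *m P2 by rewrite /N !mulmxA.
  by rewrite P2G1 mulmx0 !mul0mx.
have NZN : forall k, N *m Z k *m N = 0.
  move=> k; have -> : N *m Z k *m N = G1 *m G *m (P2 *m Z k) *m G1 *m G *m P2.
    by rewrite /N !mulmxA.
  rewrite P2Z.
  have -> : G1 *m G *m (X' k *m P2) *m G1 *m G *m P2 = G1 *m G *m X' k *m (P2 *m G1) *m G *m P2.
    by rewrite !mulmxA.
  by rewrite P2G1 mulmx0 !mul0mx.
have hfZ1 : tmulr (f _ Z) G1 = tmull G1 (f n X).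
  by apply: fint => //; apply: funext => k; rewrite /tmulr /tmull ZG1.
have hfZ2 : tmulr (f m X') P2 = tmull P2 (f _ Z).
  by apply: fint => //; apply: funext => k; rewrite /tmulr /tmull P2Z.
rewrite fX in hfZ1; rewrite fX' in hfZ2.
have fZN : forall k, f _ Z k *m N = N *m f _ Z k.
  move=> k.
  have e1 := congr1 (fun F => F k) hfZ1; have e2 := congr1 (fun F => F k) hfZ2.
  have e3 := congr1 (fun F => F k) hYG.
  rewrite /tmulr /tmull /= in e1 e2 e3.
  rewrite /N !mulmxA e1 -!mulmxA -e2 !mulmxA -[G1 *m G *m Y' k]mulmxA -e3.
  by rewrite !mulmxA.
have e1 : forall k, Z k *m N = G1 *m (X k *m G *m P2)
  by move=> k; rewrite /N !mulmxA ZG1 ?mulmxA.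
have e2 : forall k, N *m Z k = G1 *m (G *m X' k *m P2)
  by move=> k; rewrite /N -!mulmxA P2Z.
clearbody N.
set D : tup R g (n + m)%N := fun k => Z k *m N - N *m Z k.
have [e ep he] := oU _ Z UZ.
set t : C := e / (tnorm D + 1).
have D1 : 0 < tnorm D + 1 by apply: ltr_wpDl (tnorm_ge0 D) ltr01.
have tp : 0 < t by apply: divr_gt0.
set W : tup R g (n + m)%N := tadd Z (tscale t D).
have UW : U _ W.
  apply: he.
  have -> : tadd W (topp Z) = tscale t D.
    by apply: funext => k; rewrite /W /tadd /topp addrAC subrr add0r.
  rewrite tnormZ gtr0_norm // /t mulrAC -mulrA.
  rewrite -[X in _ < X]mulr1 ltr_pM2l // ltr_pdivrMr // mul1r.
  by rewrite ltrDl ltr01.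
set S : 'M[C]_(n + m) := 1%:M + t *: N.
have ZSW : tmulr Z S = tmull S W.
  apply: funext => k; rewrite /tmulr /tmull /W /tadd /tscale /D /S.
  rewrite mulmxDr mulmx1 mulmxDl mul1mx !mulmxDr -!scalemxAl -!scalemxAr.
  rewrite mulmxBr !mulmxA NZN NN mul0mx subrr !scaler0 addr0.
  by rewrite scalerBr -addrA subrK.
have fZS := fint _ _ Z W S UZ UW ZSW.
have Sinv : (1%:M - t *: N) *m S = 1%:M.
  rewrite /S mulmxBl mul1mx mulmxDr mulmx1 -scalemxAl -scalemxAr NN !scaler0 addr0.
  by rewrite addrK.
have fWZ : f _ W = f _ Z.
  apply: funext => k.
  have eS := congr1 (fun F => F k) fZS; rewrite /tmulr /tmull /= in eS.
  rewrite -[LHS]mul1mx -Sinv -mulmxA -eS.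
  have -> : f _ Z k *m S = S *m f _ Z k.
    by rewrite /S mulmxDr mulmx1 mulmxDl mul1mx -scalemxAl -scalemxAr fZN.
  by rewrite mulmxA Sinv mul1mx.
have WZ : W = Z by rewrite -(hfU W UW) fWZ hfU.
apply: funext => k.
have Dk : D k = 0.
  have := congr1 (fun F => F k) WZ; rewrite /W /tadd /tscale /=.
  move=> /eqP; rewrite -subr_eq0 addrAC subrr add0r scalemx_eq0 => /orP[|/eqP //].
  by rewrite (gt_eqF tp).
move: Dk; rewrite /D => /eqP; rewrite subr_eq0 => /eqP eZN.
rewrite e1 e2 in eZN.
have := congr1 (fun A => P1 *m A *m G2) eZN.
rewrite /tmulr /tmull !mulmxA P1G1 mul1mx -!mulmxA P2G2 !mulmx1.
by rewrite mul1mx.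
Qed.
End T.

Theorem corollary3p2 (R : realType) (g : nat)
  (U V : forall n, set (tup R g n)) (f h : forall n, tup R g n -> tup R g n) :
  ncdomain U -> ncdomain V ->
  free_map U V f ->
  (forall n, bianalytic_with_inverse (U n) (V n) (f n) (h n)) ->
  proper_analytic_free_map U V f /\ proper_analytic_free_map V U h.
Proof.
move=> [[_ dU] oU] [[_ dV] oV] fm bi.
have oU' : forall n, topen (U n) by move=> n; case: (oU n).
have oV' : forall n, topen (V n) by move=> n; case: (oV n).
split.
- split; first by split => // n; case: (bi n) => _ _ _ _ [].
  move=> n K KV cK.
  case: (bi n) => fUV hVU hf fh [fho hho].
  have -> : U n `&` f n @^-1` K = h n @` K.
    apply: funext => x; apply: propext; split.
      by move=> [Ux Kfx]; exists (f n x) => //; rewrite hf.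
    by move=> [y Ky <-]; split; [apply: hVU; apply: KV | rewrite /preimage /= fh //; apply: KV].
  exact: compact_image (oV' n) hho KV cK.
- split.
    split; last by move=> n; case: (bi n) => _ _ _ _ [].
    split; first by move=> n; case: (bi n).
    move=> n m Y Y' G VY VY' hYG; exact: (inv_free oU' dU fm bi VY VY' hYG).
  move=> n K KU cK.
  case: (bi n) => fUV hVU hf fh [fho hho].
  have -> : V n `&` h n @^-1` K = f n @` K.
    apply: funext => x; apply: propext; split.
      by move=> [Vx Khx]; exists (h n x) => //; rewrite fh.
    by move=> [y Ky <-]; split; [apply: fUV; apply: KU | rewrite /preimage /= hf //; apply: KU].
  exact: compact_image (oU' n) fho KU cK.
Qed.
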